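(* Let $G$ be a fixed graph, $k$ an integer, and $G_0,G_1,\dots,G_r=G$ a sequence of graphs on the same vertex set where $G_i$ is obtained from $G_{i+1}$ by deleting an edge $\{v_i,u_i\}$. Assume that for some $\alpha\in[0,1]$, for every $i=0,\dots,r-1$ and all $c,q\in[k]$ with $c\ne q$, the set $\Omega_i(c,c)$ is $\alpha$-isomorphic to $\Omega_i(q,c)$ with $\alpha$-function $H_i(\cdot,q)$. Let $\mu$ be the uniform distribution over the $k$-colourings of $G$ and $\mu'$ the distribution of the colouring $Y_r$ returned by the procedure described in the context. Then $\|\mu-\mu'\|\le r\cdot\alpha$.
   Context: $[k]=\{1,\dots,k\}$; $\Omega_i$ is the set of proper $k$-colourings of $G_i$ and $\Omega_i(c,q)$ the set of those assigning colour $c$ to $v_i$ and $q$ to $u_i$. $\|\nu_a-\nu_b\|=\max_A|\nu_a(A)-\nu_b(A)|$. For $\sigma\in\Omega_i$ and $q\ne\sigma_{v_i}$, the disagreement graph $Q$ is the subgraph of $G_i$ induced by all vertices reachable from $v_i$ by a path in $G_i$ whose vertices all have colours in $\{\sigma_{v_i},q\}$; $H_i(\sigma,q)$ is obtained from $\sigma$ by swapping colours $\sigma_{v_i}$ and $q$ on the vertices of $Q$. $\Omega'$ is $\alpha$-isomorphic to $\Omega''$ if there exist $A\subseteq\Omega'$, $B\subseteq\Omega''$ with $|A|\ge(1-\alpha)|\Omega'|$, $|B|\ge(1-\alpha)|\Omega''|$ and a bijection $h:A\to B$; a map $F$ on $\Omega'$ is an $\alpha$-function if $F=h$ on $A$ for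 such $A,B,h$. Procedure: $Y_0$ is uniformly distributed over $\Omega_0$; for $i=0,\dots,r-1$, if $Y_i(v_i)\ne Y_i(u_i)$ set $Y_{i+1}=Y_i$, otherwise choose $q$ uniformly from $[k]\setminus\{Y_i(v_i)\}$ and set $Y_{i+1}=H_i(Y_i,q)$. Output $Y_r$. *)

(* Defs.v *)
From HB Require Import structures.
From mathcomp Require Import all_boot all_order all_algebra.
Set Implicit Arguments. Unset Strict Implicit. Unset Printing Implicit Defensive.
Import Order.TTheory GRing.Theory Num.Theory.
Local Open Scope ring_scope.

Section Colourings.
Variables (V : finType) (k : nat).

Definition col := {ffun V -> 'I_k}.

Definition proper (e : rel V) (s : col) : bool :=
  [forall x, forall y, e x y ==> (s x != s y)].

Definition Omega (e : rel V) : {set col} := [set s | proper e s].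

Definition Omega_cq (e : rel V) (v u : V) (c q : 'I_k) : {set col} :=
  [set s | proper e s & (s v == c) && (s u == q)].

Definition disagreement (e : rel V) (v : V) (s : col) (q : 'I_k) : {set V} :=
  [set x | connect
     (fun a b => [&& e a b, (s a == s v) || (s a == q) & (s b == s v) || (s b == q)])
     v x].

Definition kempe (e : rel V) (v : V) (s : col) (q : 'I_k) : col :=
  [ffun x => if x \in disagreement e v s q then
               (if s x == s v then q else if s x == q then s v else s x)
             else s x].

Definition alpha_iso_fun {R : realFieldType} (alpha : R)
  (Om1 Om2 : {set col}) (F : col -> col) : Prop :=
  exists (A B : {set col}),
    [/\ A \subset Om1, B \subset Om2,
        (1 - alpha) * #|Om1|%:R <= #|A|%:R,
        (1 - alpha) * #|Om2|%:R <= #|B|%:R &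
        [/\ {in A, forall x, F x \in B}, {in A &, injective F} & B \subset F @: A]].

Definition unif {R : realFieldType} (S : {set col}) (s : col) : R :=
  if s \in S then (#|S|%:R)^-1 else 0.

Definition prob {R : realFieldType} (p : col -> R) (A : {set col}) : R :=
  \sum_(s in A) p s.

Definition tv_dist {R : realFieldType} (p1 p2 : col -> R) : R :=
  \big[Num.max/0]_(A : {set col}) `|prob p1 A - prob p2 A|.

(* Law of the procedure.  E i = edge relation of G_i, (v i, u i) the deleted edge. *)
Variables (E : nat -> rel V) (v u : nat -> V).

Definition step_kernel {R : realFieldType} (i : nat) (s t : col) : R :=
  if s (v i) != s (u i) then (if t == s then 1 else 0)
  else \sum_(q : 'I_k | q != s (v i))
         (k.-1%:R)^-1 * (if kempe (E i) (v i) s q == t then 1 else 0).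

Fixpoint law {R : realFieldType} (n : nat) : col -> R :=
  match n with
  | 0 => unif (Omega (E 0))
  | i.+1 => fun t => \sum_(s : col) law i s * step_kernel i s t
  end.

End Colourings.

(* Main.v *)
Require Import Defs.
From HB Require Import structures.
From mathcomp Require Import all_boot all_order all_algebra.
From mathcomp Require Import lra.
Set Implicit Arguments. Unset Strict Implicit. Unset Printing Implicit Defensive.
Import Order.TTheory GRing.Theory Num.Theory.
Local Open Scope ring_scope.

Lemma alg (R : realFieldType) (M D S al k1 : R) : 0 < M -> 0 <= D -> 0 <= al ->
  1 <= k1 -> (1 - al) * M <= S -> (1 - al) * (k1 * D) <= S ->
  S * Num.max (M^-1 - (M + D)^-1 - (M + D)^-1 * k1^-1) 0
    + (M - S) * (M^-1 - (M + D)^-1) <= al.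
Proof.
move=> M0 D0 a0 k10 hS1 hS2.
have N0 : 0 < M + D by lra.
have k0 : 0 < k1 by lra.
have hMi : M * M^-1 = 1 by rewrite mulfV // gt_eqF.
have hNi : (M + D) * (M + D)^-1 = 1 by rewrite mulfV // gt_eqF.
have hki : k1 * k1^-1 = 1 by rewrite mulfV // gt_eqF.
have Mi0 : 0 < M^-1 by rewrite invr_gt0.
have Ni0 : 0 < (M + D)^-1 by rewrite invr_gt0.
have ki0 : 0 < k1^-1 by rewrite invr_gt0.
have eDN : D * (M + D)^-1 = 1 - M * (M + D)^-1.
  by have := hNi; rewrite mulrDl => h; rewrite -h [X in _ = X - _]addrC addrK.
have MN0 : 0 <= M * (M + D)^-1 by rewrite mulr_ge0 // ltW.
have h0 : 0 <= M^-1 - (M + D)^-1.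
  rewrite subr_ge0 lef_pV2 ?posrE //; lra.
case: (lerP (M^-1 - (M + D)^-1 - (M + D)^-1 * k1^-1) 0) => hc.
  rewrite mulr0 add0r.
  have : (M - S) * (M^-1 - (M + D)^-1) <= (al * M) * (M^-1 - (M + D)^-1).
    by apply: ler_wpM2r => //; lra.
  have -> : al * M * (M^-1 - (M + D)^-1) = al * (D * (M + D)^-1).
    by rewrite eDN !mulrBr mulrA -(mulrA al) hMi; lra.
  move=> h1; apply: le_trans h1 _.
  rewrite -{2}(mulr1 al); apply: ler_wpM2l => //; lra.
idtac.
have e : S * (M^-1 - (M + D)^-1 - (M + D)^-1 * k1^-1) + (M - S) * (M^-1 - (M + D)^-1)
   = D * (M + D)^-1 - S * ((M + D)^-1 * k1^-1).
  rewrite eDN; rewrite !mulrBr !mulrBl hMi; lra.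
rewrite e.
have : (1 - al) * (k1 * D) * ((M + D)^-1 * k1^-1) <= S * ((M + D)^-1 * k1^-1).
  by apply: ler_wpM2r => //; rewrite mulr_ge0 // ltW.
have -> : (1 - al) * (k1 * D) * ((M + D)^-1 * k1^-1) = (1 - al) * (D * (M + D)^-1).
  rewrite -!mulrA; congr (_ * _); rewrite [k1 * _]mulrC -!mulrA; congr (_ * _).
  by rewrite mulVf ?mulr1 // gt_eqF.
rewrite eDN => h1.
have : al * (1 - M * (M + D)^-1) <= al by rewrite -{2}(mulr1 al); apply: ler_wpM2l => //; lra.
rewrite mulrBr mulrBl mulrBl mul1r in h1 *; lra.
Qed.

Section TV.
Variables (R : realFieldType) (V : finType) (k : nat).
Local Notation col := (Defs.col V k).
Implicit Types (p : col -> R).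

Lemma tv_ge p1 p2 (A : {set col}) : `|prob p1 A - prob p2 A| <= tv_dist p1 p2.
Proof.
rewrite /tv_dist (bigD1 A) //=; rewrite le_max; by rewrite lexx.
Qed.

Lemma tv_le p1 p2 c : 0 <= c -> (forall A, `|prob p1 A - prob p2 A| <= c) ->
  tv_dist p1 p2 <= c.
Proof.
move=> c0 H; rewrite /tv_dist; elim/big_ind: _ => //.
by move=> x y hx hy; rewrite ge_max hx hy.
Qed.

Lemma tv_tri p1 p2 p3 : tv_dist p1 p3 <= tv_dist p1 p2 + tv_dist p2 p3.
Proof.
apply: tv_le.
  by apply: addr_ge0; apply: le_trans (tv_ge _ _ set0); rewrite normr_ge0.
move=> A; apply: le_trans (ler_distD (prob p2 A) _ _) _.
by apply: lerD; apply: tv_ge.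
Qed.

Definition kap (K : col -> col -> R) p : col -> R := fun t => \sum_s p s * K s t.

Lemma sum_kappa (w kap : col -> R) : (forall s, 0 <= kap s <= 1) ->
  `|\sum_s w s * kap s| <=
    Num.max (\sum_(s | 0 < w s) w s) (- \sum_(s | ~~ (0 < w s)) w s).
Proof.
move=> hk; rewrite (bigID (fun s => 0 < w s)) /=.
have h1 : \sum_(s | 0 < w s) w s * kap s <= \sum_(s | 0 < w s) w s.
  apply: ler_sum => s hs; have /andP[_ h] := hk s.
  by rewrite -{2}(mulr1 (w s)) ler_wpM2l // ltW.
have h2 : 0 <= \sum_(s | 0 < w s) w s * kap s.
  apply: sumr_ge0 => s hs; have /andP[h _] := hk s.
  by rewrite mulr_ge0 // ltW.
have h3 : \sum_(s | ~~ (0 < w s)) w s * kap s <= 0.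
  apply: sumr_le0 => s hs; have /andP[h _] := hk s.
  by rewrite mulr_le0_ge0 // leNgt.
have h4 : \sum_(s | ~~ (0 < w s)) w s <= \sum_(s | ~~ (0 < w s)) w s * kap s.
  apply: ler_sum => s hs; have /andP[_ h] := hk s.
  rewrite -{1}(mulr1 (w s)) ler_wnM2l // leNgt //.
set M := Num.max _ _.
have hM1 : \sum_(s | 0 < w s) w s <= M by rewrite le_max lexx.
have hM2 : - \sum_(s | ~~ (0 < w s)) w s <= M by rewrite le_max lexx orbT.
rewrite ler_norml; apply/andP; split; lra.
Qed.

Lemma tv_ge0 p1 p2 : 0 <= tv_dist p1 p2.
Proof. exact: le_trans (normr_ge0 _) (tv_ge p1 p2 set0). Qed.

Lemma prob_kap K p A : prob (kap K p) A = \sum_s p s * \sum_(t in A) K s t.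
Proof. rewrite /prob /kap exchange_big; apply: eq_bigr => s _; by rewrite mulr_sumr. Qed.

Lemma sub_sum (F : col -> R) (A : {set col}) : (forall t, 0 <= F t) ->
  \sum_(t in A) F t <= \sum_t F t.
Proof.
move=> F0; rewrite [X in _ <= X](bigID (mem A)) /= lerDl.
by apply: sumr_ge0.
Qed.

Lemma tv_kernel K p1 p2 : (forall s t, 0 <= K s t) -> (forall s, \sum_t K s t = 1) ->
  tv_dist (kap K p1) (kap K p2) <= tv_dist p1 p2.
Proof.
move=> K0 K1; apply: tv_le; first exact: tv_ge0.
move=> A; rewrite !prob_kap -sumrB.
under eq_bigr do rewrite -mulrBl.
apply: le_trans (sum_kappa _ _) _.
  move=> s; apply/andP; split; first by apply: sumr_ge0.
  by rewrite -(K1 s); apply: sub_sum.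
rewrite ge_max; apply/andP; split.
  have -> : \sum_(s | 0 < p1 s - p2 s) (p1 s - p2 s) =
     prob p1 [set s | 0 < p1 s - p2 s] - prob p2 [set s | 0 < p1 s - p2 s].
    by rewrite /prob -sumrB; apply: eq_bigl => s; rewrite inE.
  exact: le_trans (ler_norm _) (tv_ge _ _ _).
have -> : - \sum_(s | ~~ (0 < p1 s - p2 s)) (p1 s - p2 s) =
   prob p2 [set s | ~~ (0 < p1 s - p2 s)] - prob p1 [set s | ~~ (0 < p1 s - p2 s)].
  rewrite /prob -sumrB -sumrN; apply: eq_big => s; first by rewrite inE.
  by rewrite opprB.
apply: le_trans (ler_norm _) _; rewrite distrC; exact: tv_ge.
Qed.

Lemma tv_pos p1 p2 : \sum_t p1 t = \sum_t p2 t ->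
  tv_dist p1 p2 <= \sum_t Num.max (p1 t - p2 t) 0.
Proof.
move=> hs; apply: tv_le.
  by apply: sumr_ge0 => t _; rewrite le_max lexx orbT.
have key : forall B : {set col}, prob p1 B - prob p2 B <= \sum_t Num.max (p1 t - p2 t) 0.
  move=> B; rewrite /prob -sumrB; apply: le_trans (sub_sum _ _) .
    by apply: ler_sum => t _; rewrite le_max lexx.
  by move=> t; rewrite le_max lexx orbT.
move=> A; rewrite ler_norml key andbT.
have e : forall p, prob p A = \sum_t p t - prob p (~: A).
  move=> p; rewrite /prob [X in _ = X - _](bigID (mem A)) /=.
  have -> : \sum_(t in ~: A) p t = \sum_(t | t \notin A) p t.
    by apply: eq_bigl => t; rewrite inE.
  by rewrite addrK.
rewrite !e hs lerNl opprB.
have := key (~: A); lra.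
Qed.


Variables (E : nat -> rel V) (v u : nat -> V).
Lemma proper_step (e e' : rel V) (a b : V) (s : col) :
  symmetric e' -> e' a b ->
  (forall x y, e x y = e' x y && ~~ (((x == a) && (y == b)) || ((x == b) && (y == a)))) ->
  Defs.proper e' s = Defs.proper e s && (s a != s b).
Proof.
move=> sym hab He; apply/idP/idP.
  move/forallP=> H; apply/andP; split.
    apply/forallP=> x; apply/forallP=> y; apply/implyP; rewrite He => /andP[hxy _].
    exact: (implyP (forallP (H x) y) hxy).
  exact: (implyP (forallP (H a) b) hab).
case/andP=> /forallP H hne; apply/forallP => x; apply/forallP => y; apply/implyP => hxy.
case: (boolP ((x == a) && (y == b) || (x == b) && (y == a))).
  by case/orP=> /andP[/eqP-> /eqP->] //; rewrite eq_sym.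
move=> hn; have hx : e x y by rewrite He hxy hn.
exact: (implyP (forallP (H x) y) hx).
Qed.

Lemma kernel_ge0 i s t : 0 <= @step_kernel V k E v u R i s t :> R.
Proof.
rewrite /step_kernel; case: ifP => _; first by case: ifP.
apply: sumr_ge0 => q _; rewrite mulr_ge0 // ?invr_ge0 ?ler0n //; by case: ifP.
Qed.

Lemma kernel_sum i s : (1 < k)%N -> \sum_t @step_kernel V k E v u R i s t = 1 :> R.
Proof.
move=> k1; rewrite /step_kernel; case h: (s (v i) != s (u i)).
  by rewrite (bigD1 s) //= eqxx (@big1 _ _ _ _ _ _ (fun t : col => if t == s then 1 else 0)) ?addr0 // => t /negbTE ->.
rewrite /= (exchange_big _ _ _ xpredT (fun q : 'I_k => q != s (v i))) /=.
under eq_bigr => q _.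
  rewrite -mulr_sumr (bigD1 (kempe (E i) (v i) s q)) //= eqxx big1 ?addr0 ?mulr1;
    last by move=> t; rewrite eq_sym => /negbTE ->.
over.
transitivity (\sum_(q in predC1 (s (v i))) (k.-1%:R)^-1 : R).
  by apply: eq_bigl.
rewrite sumr_const cardC1 card_ord -(mulr_natl ((k.-1%:R)^-1 : R) k.-1) mulfV // pnatr_eq0 -lt0n -ltnS prednK //.
by apply: leq_trans k1.
Qed.

Lemma unif_sum (S : {set col}) : S != set0 -> \sum_t unif S t = 1 :> R.
Proof.
move=> ne; rewrite /unif -big_mkcond sumr_const -(mulr_natl ((#|S|%:R)^-1 : R) #|S|) mulfV //.
by rewrite pnatr_eq0 -lt0n card_gt0.
Qed.

Lemma unif_ge0 (S : {set col}) t : 0 <= unif S t :> R.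
Proof. by rewrite /unif; case: ifP => // _; rewrite invr_ge0 ler0n. Qed.

Lemma step_bound (al : R) i :
  (1 < k)%N -> symmetric (E i.+1) -> E i.+1 (v i) (u i) ->
  (forall x y, E i x y =
        E i.+1 x y && ~~ (((x == v i) && (y == u i)) || ((x == u i) && (y == v i)))) ->
  Omega k (E i.+1) != set0 -> 0 <= al ->
  (forall c q : 'I_k, c != q ->
     alpha_iso_fun al (Omega_cq (E i) (v i) (u i) c c)
                      (Omega_cq (E i) (v i) (u i) q c)
                      (fun s => kempe (E i) (v i) s q)) ->
  tv_dist (unif (Omega k (E i.+1)))
          (kap (@step_kernel V k E v u R i) (unif (Omega k (E i)))) <= al.
Proof.
move=> k1 sym hab He ne a0 Hiso.
set O' := Omega k (E i.+1); set O := Omega k (E i).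
set K := @step_kernel V k E v u R i.
have memO' : forall t, (t \in O') = (t \in O) && (t (v i) != t (u i)).
  by move=> t; rewrite !inE (@proper_step (E i) (E i.+1) (v i) (u i) t sym hab He).
have sub : O' \subset O by apply/subsetP=> t; rewrite memO' => /andP[].
have O'0 : (0 < #|O'|)%N by rewrite card_gt0.
have O0 : (0 < #|O|)%N by apply: leq_trans O'0 (subset_leq_card sub).
set M := #|O'|%:R : R; set N := #|O|%:R : R.
have M0 : 0 < M by rewrite ltr0n.
have N0 : 0 < N by rewrite ltr0n.
have MN : M <= N by rewrite ler_nat subset_leq_card.
set p := kap K (unif O).
have K0 : forall s t, 0 <= K s t by move=> s t; apply: kernel_ge0.
have p0 : forall t, 0 <= p t.
  by move=> t; apply: sumr_ge0 => s _; rewrite mulr_ge0 // unif_ge0.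
have sum1 : \sum_t unif O' t = 1 :> R by apply: unif_sum.
have sum2 : \sum_t p t = 1.
  rewrite /p /kap exchange_big /=.
  under eq_bigr do rewrite -mulr_sumr kernel_sum // mulr1.
  apply: unif_sum; apply/set0Pn; have /set0Pn [t ht] := ne; exists t; exact: (subsetP sub).
apply: le_trans (tv_pos (etrans sum1 (esym sum2))) _.
pose f := fun t => Num.max (M^-1 - p t) 0.
have eF : \sum_t Num.max (unif O' t - p t) 0 = \sum_(t in O') f t.
  rewrite (bigID (mem O')) /= [X in _ + X]big1 ?addr0.
    by apply: eq_bigr => t ht; rewrite /unif ht.
  move=> t ht; rewrite /unif (negbTE ht) sub0r; apply: max_r.
  by rewrite oppr_le0.
rewrite eF.
have KtO : forall t, t \in O' -> unif O t * K t t = N^-1.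
  move=> t; rewrite memO' => /andP[tO tne].
  by rewrite /unif tO /K /step_kernel tne eqxx mulr1.
have LB1 : forall t, t \in O' -> N^-1 <= p t.
  move=> t tO'; rewrite /p /kap (bigD1 t) //= KtO // lerDl.
  by apply: sumr_ge0 => s _; rewrite mulr_ge0 // unif_ge0.
have LB2 : forall (c q : 'I_k) s t, c != q ->
    s \in Omega_cq (E i) (v i) (u i) c c -> kempe (E i) (v i) s q = t -> t \in O' ->
    N^-1 + N^-1 * (k.-1%:R)^-1 <= p t.
  move=> c q s t cq; rewrite inE => /andP[sO /andP[/eqP sv /eqP su]] kt tO'.
  have tv : t (v i) = q by rewrite -kt /kempe ffunE inE connect0 eqxx.
  have st : s != t by apply/eqP => est; move: cq; rewrite -sv est tv eqxx.
  have sO' : s \in O by rewrite inE.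
  have Kst : (k.-1%:R)^-1 <= K s t.
    rewrite /K /step_kernel sv su eqxx /= (bigD1 q) /=; last by rewrite eq_sym.
    rewrite kt eqxx mulr1 lerDl; apply: sumr_ge0 => q' _.
    by rewrite mulr_ge0 ?invr_ge0 ?ler0n //; case: ifP.
  rewrite /p /kap (bigD1 t) //= KtO // (bigD1 s st) /= lerD2l.
  apply: le_trans (_ : _ <= unif O s * K s t) _.
    by rewrite /unif sO' ler_wpM2l // invr_ge0 ler0n.
  by rewrite lerDl; apply: sumr_ge0 => s' _; rewrite mulr_ge0 // unif_ge0.
pose Y := fun j : 'I_k * 'I_k => Omega_cq (E i) (v i) (u i) j.2 j.1.
have inner : forall j : 'I_k * 'I_k, j.1 != j.2 ->
    forall t, (t \in O') && ((t (u i), t (v i)) == j) = (t \in Y j).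
  move=> [c0 q0] /= cq t; rewrite memO' !inE xpair_eqE /=.
  by case: (t (u i) =P c0) => [->|]; case: (t (v i) =P q0) => [->|];
    rewrite ?andbF ?andbT ?eqxx //= eq_sym cq andbT.
have innerO : forall (j : 'I_k * 'I_k) t, (t \in O) && ((t (u i), t (v i)) == j) = (t \in Y j).
  case=> c q t; rewrite !inE xpair_eqE /=.
  by case: (t (u i) == c); case: (t (v i) == q);
    rewrite ?andbF ?andbT.
have h0 : 0 <= M^-1 - N^-1 by rewrite subr_ge0 lef_pV2 ?posrE.
pose h := M^-1 - N^-1.
pose g := Num.max (M^-1 - N^-1 - N^-1 * (k.-1%:R)^-1) 0.
have pp : forall j : 'I_k * 'I_k, exists b : nat, j.1 != j.2 ->
   [/\ (b <= #|Y j|)%N, (1 - al) * #|Y j|%:R <= b%:R,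
       (1 - al) * #|Y (j.1, j.1)|%:R <= b%:R &
       \sum_(t in Y j) f t <= b%:R * g + (#|Y j|%:R - b%:R) * h].
  case=> c q; case: (eqVneq c q) => [->|cq]; first by exists 0%N.
  case: (Hiso c q cq) => A [B [sA sB hA hB [mAB iA sBF]]].
  have cardAB : #|B| = #|A|.
    apply/eqP; rewrite eqn_leq; apply/andP; split.
      exact: leq_trans (subset_leq_card sBF) (leq_imset_card _ _).
    rewrite -(card_in_imset iA); apply: subset_leq_card.
    by apply/subsetP => x /imsetP [s sa ->]; exact: mAB.
  exists #|B| => _; split => //.
  - exact: subset_leq_card sB.
  - by rewrite cardAB.
  rewrite (big_setID B) /= (setIidPr sB); apply: lerD.
    apply: le_trans (_ : \sum_(t in B) g <= _).
      apply: ler_sum => t tB.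
      have tY : t \in Y (c, q) by exact: (subsetP sB).
      have tO' : t \in O' by move: (inner (c, q) cq t); rewrite tY => /andP[].
      have /imsetP [s sa est] := subsetP sBF t tB.
      have := LB2 c q s t cq (subsetP sA s sa) (esym est) tO' => lb.
      rewrite /f /g ge_max !le_max lexx orbT andbT; apply/orP; left.
      by rewrite -addrA -opprD lerD2l lerN2.
    by rewrite sumr_const mulr_natl.
  apply: le_trans (_ : \sum_(t in Y (c, q) :\: B) h <= _).
    apply: ler_sum => t; rewrite inE => /andP[_ tY].
    have tO' : t \in O' by move: (inner (c, q) cq t); rewrite tY => /andP[].
    rewrite /f /h ge_max h0 andbT lerD2l lerN2; exact: LB1.
  rewrite sumr_const cardsD (setIidPr sB) -(mulr_natl h) natrB //.
  exact: subset_leq_card sB.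
have [b hb] := fin_all_exists pp.
have offP : forall t, t \in O' -> (t (u i), t (v i)).1 != (t (u i), t (v i)).2.
  by move=> t; rewrite memO' eq_sym => /andP[].
have eM : M = \sum_(j | j.1 != j.2) #|Y j|%:R.
  have -> : M = \sum_(t in O') (1 : R) by rewrite sumr_const.
  rewrite (partition_big (fun t : col => (t (u i), t (v i))) (fun j : 'I_k * 'I_k => j.1 != j.2)) //=.
  apply: eq_bigr => j hj; transitivity (\sum_(t in Y j) (1 : R)).
    by apply: eq_bigl => t; exact: inner.
  by rewrite sumr_const.
have eF2 : \sum_(t in O') f t = \sum_(j | j.1 != j.2) \sum_(t in Y j) f t.
  rewrite (partition_big (fun t : col => (t (u i), t (v i))) (fun j : 'I_k * 'I_k => j.1 != j.2)) //=.
  by apply: eq_bigr => j hj; apply: eq_bigl => t; exact: inner.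
pose D := \sum_(j | j.1 == j.2) #|Y j|%:R : R.
have eN : N = D + M.
  have -> : N = \sum_(t in O) (1 : R) by rewrite sumr_const.
  rewrite (partition_big (fun t : col => (t (u i), t (v i))) xpredT) //=.
  rewrite (bigID (fun j : 'I_k * 'I_k => j.1 == j.2)) /= eM; congr (_ + _).
    apply: eq_big => [j|j _] //; transitivity (\sum_(t in Y j) (1 : R)).
      by apply: eq_bigl => t; exact: innerO.
    by rewrite sumr_const.
  apply: eq_big => [j|j _] //; transitivity (\sum_(t in Y j) (1 : R)).
    by apply: eq_bigl => t; exact: innerO.
  by rewrite sumr_const.
have eX : \sum_(j | j.1 != j.2) #|Y (j.1, j.1)|%:R = k.-1%:R * D.
  have -> : \sum_(j | j.1 != j.2) #|Y (j.1, j.1)|%:R =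
      \sum_c \sum_(q | c != q) (#|Y (c, c)|%:R : R) by rewrite pair_big_dep.
  have -> : D = \sum_c \sum_(q | c == q) (#|Y (c, q)|%:R : R) by rewrite pair_big_dep.
  rewrite mulr_sumr; apply: eq_bigr => c _.
  have -> : \sum_(q | c == q) (#|Y (c, q)|%:R : R) = #|Y (c, c)|%:R.
    transitivity (\sum_(q | q == c) (#|Y (c, q)|%:R : R)).
      by apply: eq_bigl => q; rewrite eq_sym.
    by rewrite big_pred1_eq.
  transitivity (\sum_(q in predC1 c) (#|Y (c, c)|%:R : R)).
    by apply: eq_bigl => q; rewrite /= eq_sym.
  by rewrite sumr_const cardC1 card_ord mulr_natl.
pose S := \sum_(j | j.1 != j.2) (b j)%:R : R.
rewrite eF2.
apply: le_trans (_ : _ <= \sum_(j | j.1 != j.2) ((b j)%:R * g + (#|Y j|%:R - (b j)%:R) * h)) _.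
  by apply: ler_sum => j hj; case: (hb j hj).
have -> : \sum_(j | j.1 != j.2) ((b j)%:R * g + (#|Y j|%:R - (b j)%:R) * h)
    = S * g + (M - S) * h.
  rewrite big_split /= -mulr_suml; congr (_ + _).
  by rewrite -mulr_suml sumrB -eM.
have hS1 : (1 - al) * M <= S.
  rewrite eM mulr_sumr; apply: ler_sum => j hj; by case: (hb j hj).
have hS2 : (1 - al) * (k.-1%:R * D) <= S.
  rewrite -eX mulr_sumr; apply: ler_sum => j hj; by case: (hb j hj).
have D0 : 0 <= D by apply: sumr_ge0 => j _; rewrite ler0n.
have k10 : 1 <= k.-1%:R :> R by rewrite ler1n; case: (k) k1 => [|[|n]].
have := alg M0 D0 a0 k10 hS1 hS2.
by rewrite -[M + D]addrC -eN.
Qed.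
End TV.


From mathcomp Require Import zify.

Theorem theorem5 (R : realFieldType) (V : finType) (k r : nat)
  (E : nat -> rel V) (v u : nat -> V) (alpha : R) :
  (1 < k)%N ->
  (* each G_i (i <= r) is a simple graph on V *)
  (forall i, (i <= r)%N -> irreflexive (E i) /\ symmetric (E i)) ->
  (* G_i is obtained from G_{i+1} by deleting the edge {v_i, u_i} *)
  (forall i, (i < r)%N ->
     E i.+1 (v i) (u i) /\
     (forall x y, E i x y =
        E i.+1 x y && ~~ (((x == v i) && (y == u i)) || ((x == u i) && (y == v i))))) ->
  (* G = G_r has a k-colouring, so that mu is defined *)
  Omega k (E r) != set0 ->
  0 <= alpha <= 1 ->
  (forall i, (i < r)%N -> forall c q : 'I_k, c != q ->
     alpha_iso_fun alpha (Omega_cq (E i) (v i) (u i) c c)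
                         (Omega_cq (E i) (v i) (u i) q c)
                         (fun s => kempe (E i) (v i) s q)) ->
  tv_dist (unif (Omega k (E r))) (@law V k E v u R r) <= r%:R * alpha.
Proof.
move=> k1 Hsimp Hdel ne /andP[a0 a1] Hiso.
have sub : forall j, (j < r)%N -> Omega k (E j.+1) \subset Omega k (E j).
  move=> j hj; have [hab He] := Hdel j hj.
  have [_ sym] := Hsimp j.+1 hj.
  apply/subsetP => t; rewrite !inE (@proper_step V k (E j) (E j.+1) (v j) (u j) t sym hab He).
  by case/andP.
have subr : forall d, (d <= r)%N -> Omega k (E r) \subset Omega k (E (r - d)%N).
  elim=> [|d IH] hd; first by rewrite subn0.
  apply: subset_trans (IH (ltnW hd)) _.
  have e : (r - d = (r - d.+1).+1)%N by lia.
  rewrite e; apply: sub; lia.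
have nej : forall j, (j <= r)%N -> Omega k (E j) != set0.
  move=> j hj; have := subr (r - j)%N (leq_subr _ _).
  rewrite subKn // => hs; apply/set0Pn; have /set0Pn [t ht] := ne.
  by exists t; exact: (subsetP hs).
suff : forall j, (j <= r)%N ->
    tv_dist (unif (Omega k (E j))) (@law V k E v u R j) <= j%:R * alpha.
  by apply.
elim=> [|j IH] hj.
  rewrite mul0r; apply: tv_le => // A; by rewrite subrr normr0.
have hj' : (j < r)%N by exact: hj.
have [hab He] := Hdel j hj'.
have [_ sym] := Hsimp j.+1 hj.
apply: le_trans (tv_tri _ (kap (@step_kernel V k E v u R j) (unif (Omega k (E j)))) _) _.
have -> : (j.+1)%:R * alpha = alpha + j%:R * alpha by rewrite -addn1 natrD mulrDl mul1r addrC.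
apply: lerD.
  apply: (@step_bound R V k E v u alpha j) => //; first exact: nej.
  exact: Hiso.
apply: le_trans (IH (ltnW hj)).
apply: tv_kernel.
  by move=> s t; apply: kernel_ge0.
by move=> s; apply: kernel_sum.
Qed.
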